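(* For $m\ge 2$ and $E>0$ let $$f_m(E)=\frac{e^{-4E}\,\Gamma(m)\,I_{m-1}(4E)}{2m\,(2E)^{m-3}}.$$ (i) If $a>0$ and $E=a(m-1)$, then $f_m(E)$ decays exponentially in $m$: there is $c\in(0,1)$ with $f_m(a(m-1))=O(c^m)$. (ii) If $a>0$, $r<1$ and $E=am^r$, then $f_m(E)$ does not decay exponentially: for every $b\in(0,1)$, $f_m(am^r)/b^m\to\infty$ as $m\to\infty$. (iii) If $E=E_m$ vanishes exponentially in $m$ (i.e. $E_m=O(q^m)$ for some $q\in(0,1)$), then $f_m(E_m)$ decays exponentially in $m$.
   Context: $I_{m-1}$ is the modified Bessel function of the first kind of order $m-1$. The quantity $f_m(E)$ is the prefactor in the paper's Proposition 1: for a coherent input of total intensity $E$ on $m$ modes and a Haar-random linear optical circuit, the expected squared gradient of the compiling cost $1-|\langle\vec u|U(\theta)|\vec u\rangle|^2$ lies in $f_m(E)[\xi_{\min},\xi_{\max}]$, with $\xi_{\min},\xi_{\max}$ the minimal/maximal squared column norms of the generator matrix of the trained layer. *)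

(* Defs.v *)
From Stdlib Require Import Reals Arith Factorial.
From Coquelicot Require Import Coquelicot.
Open Scope R_scope.

(* Modified Bessel function of the first kind of integer order n:
   I_n(x) = sum_{k>=0} (x/2)^(2k+n) / (k! * Gamma(k+n+1)),  Gamma(k+n+1) = (k+n)!. *)
Definition besselI (n : nat) (x : R) : R :=
  Series (fun k : nat => (x / 2) ^ (2 * k + n) / (INR (fact k) * INR (fact (k + n)))).

(* f_m(E) = e^{-4E} Gamma(m) I_{m-1}(4E) / (2 m (2E)^{m-3}),  Gamma(m) = (m-1)!.
   Meaningful for m >= 2 and E > 0 (real power (2E)^(m-3) via Rpower). *)
Definition fm (m : nat) (E : R) : R :=
  exp (- (4 * E)) * INR (fact (m - 1)) * besselI (m - 1) (4 * E)
  / (2 * INR m * Rpower (2 * E) (INR m - 3)).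

Definition bigO_geom (u : nat -> R) (c : R) : Prop :=
  exists C : R, exists N : nat, forall m : nat, (N <= m)%nat -> Rabs (u m) <= C * c ^ m.

Definition exp_decay (u : nat -> R) : Prop :=
  exists c : R, 0 < c < 1 /\ bigO_geom u c.

(* Main.v *)
Require Import Defs.
From Stdlib Require Import Reals Lra Lia Factorial Arith.
From Coquelicot Require Import Coquelicot.
Open Scope R_scope.

Lemma pow2_ge1 : forall n, (1 <= 2 ^ n)%nat.
Proof. induction n; simpl; lia. Qed.

Lemma fact_binom : forall n a b, (a + b = n)%nat -> (fact n <= 2^n * fact a * fact b)%nat.
Proof.
  induction n as [|n IH]; intros a b Hab.
  - assert (a = 0%nat) by lia; assert (b = 0%nat) by lia; subst; simpl; lia.
  - destruct a as [|a'].
    + simpl in Hab; subst b. assert (1 <= 2 ^ S n)%nat by apply pow2_ge1.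
      change (fact 0) with 1%nat. nia.
    + destruct b as [|b'].
      * assert (E : S a' = S n) by lia. rewrite E.
        assert (1 <= 2 ^ S n)%nat by apply pow2_ge1. change (fact 0) with 1%nat. nia.
      * destruct (le_lt_dec (S b') (S a')) as [Hle|Hlt].
        -- specialize (IH a' (S b') ltac:(lia)).
           change (fact (S n)) with (S n * fact n)%nat.
           change (fact (S a')) with (S a' * fact a')%nat.
           rewrite Nat.pow_succ_r'.
           assert (S n <= 2 * S a')%nat by lia.
           set (X := (2 ^ n * fact a' * fact (S b'))%nat) in *.
           assert (S n * fact n <= S n * X)%nat by nia.
           assert (S n * X <= 2 * S a' * X)%nat by nia.
           unfold X in *. nia.
        -- specialize (IH (S a') b' ltac:(lia)).
           change (fact (S n)) with (S n * fact n)%nat.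
           change (fact (S b')) with (S b' * fact b')%nat.
           rewrite Nat.pow_succ_r'.
           assert (S n <= 2 * S b')%nat by lia.
           set (X := (2 ^ n * fact (S a') * fact b')%nat) in *.
           assert (S n * fact n <= S n * X)%nat by nia.
           assert (S n * X <= 2 * S b' * X)%nat by nia.
           unfold X in *. nia.
Qed.

Lemma fact_lb : forall k v, (fact v * (S v)^k <= fact (k + v))%nat.
Proof.
  induction k as [|k IH]; intros v.
  - simpl. lia.
  - change (fact (S k + v)) with (S (k + v) * fact (k + v))%nat.
    rewrite Nat.pow_succ_r'. specialize (IH v).
    assert (S v <= S (k+v))%nat by lia. nia.
Qed.

Lemma fact_ub : forall n, (fact n <= n ^ n)%nat.
Proof.
  induction n as [|n IH].
  - simpl; lia.
  - change (fact (S n)) with (S n * fact n)%nat. rewrite Nat.pow_succ_r'.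
    assert (n ^ n <= S n ^ n)%nat by (apply Nat.pow_le_mono_l; lia). nia.
Qed.

Definition tt (v : nat) (z : R) (k : nat) : R :=
  z ^ (2 * k + v) / (INR (fact k) * INR (fact (k + v))).

Lemma exp_is_series x : is_series (fun k => x ^ k / INR (fact k)) (exp x).
Proof.
  pose proof (is_exp_Reals x) as H. unfold is_pseries in H.
  eapply is_series_ext; [|exact H]. intros k. simpl.
  rewrite pow_n_pow. reflexivity.
Qed.

Lemma exp_ex_series x : ex_series (fun k => x ^ k / INR (fact k)).
Proof. eexists; apply exp_is_series. Qed.

Lemma Rdivpow a b k : (a / b) ^ k = a ^ k / b ^ k.
Proof. unfold Rdiv; rewrite Rpow_mult_distr, pow_inv; reflexivity. Qed.

Lemma exp_ex_series_scal c x : ex_series (fun k => c * (x ^ k / INR (fact k))).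
Proof. exists (c * exp x). apply (is_series_scal_l c _ _ (exp_is_series x)). Qed.

Lemma tt_nonneg v z k : 0 <= z -> 0 <= tt v z k.
Proof.
  intros Hz. unfold tt. apply Rmult_le_pos. apply pow_le; lra.
  apply Rlt_le, Rinv_0_lt_compat, Rmult_lt_0_compat; apply INR_fact_lt_0.
Qed.

Lemma tt_le1 v z k : 0 <= z ->
  tt v z k <= z ^ v / INR (fact v) * ((z ^ 2 / INR (S v)) ^ k / INR (fact k)).
Proof.
  intros Hz. unfold tt.
  assert (HF := fact_lb k v). apply le_INR in HF. rewrite mult_INR, pow_INR in HF.
  pose proof (INR_fact_lt_0 k). pose proof (INR_fact_lt_0 v). pose proof (INR_fact_lt_0 (k+v)).
  assert (0 < INR (S v)) by (apply lt_0_INR; lia).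
  assert (0 < INR (S v) ^ k) by (apply pow_lt; lra).
  rewrite Rdivpow.
  rewrite pow_add, pow_mult.
  set (A := (z^2)^k). set (B := z ^ v).
  assert (0 <= A) by (apply pow_le; nra). assert (0 <= B) by (apply pow_le; lra).
  set (F := INR (fact k)) in *. set (G := INR (fact (k+v))) in *.
  set (Hh := INR (fact v)) in *. set (P := INR (S v) ^ k) in *.
  replace (B / Hh * (A / P / F)) with (A * B / F * / (Hh * P)) by (field; lra).
  replace (A * B / (F * G)) with (A * B / F * / G) by (field; lra).
  apply Rmult_le_compat_l.
  - apply Rmult_le_pos; [nra| apply Rlt_le, Rinv_0_lt_compat; lra].
  - apply Rinv_le_contravar; [nra|lra].
Qed.

Lemma tt_le2 v z k : 0 <= z -> tt v z k <= (2 * z) ^ (2 * k + v) / INR (fact (2 * k + v)).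
Proof.
  intros Hz. unfold tt.
  assert (HF := fact_binom (2*k+v) k (k+v) ltac:(lia)). apply le_INR in HF.
  rewrite !mult_INR, pow_INR in HF. simpl (INR 2) in HF.
  pose proof (INR_fact_lt_0 k). pose proof (INR_fact_lt_0 (k+v)). pose proof (INR_fact_lt_0 (2*k+v)).
  rewrite Rpow_mult_distr.
  set (n := (2*k+v)%nat) in *.
  assert (0 < 2 ^ n) by (apply pow_lt; lra).
  assert (0 <= z ^ n) by (apply pow_le; lra).
  set (F := INR (fact k)) in *. set (G := INR (fact (k+v))) in *. set (N := INR (fact n)) in *.
  set (T := 2 ^ n) in *. set (Z := z ^ n) in *.
  replace (Z / (F * G)) with (Z * / (F * G)) by reflexivity.
  replace (T * Z / N) with (Z * (T / N)) by (field; lra).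
  apply Rmult_le_compat_l; [lra|].
  assert (0 < F*G*N) by (repeat apply Rmult_lt_0_compat; lra).
  apply (Rmult_le_reg_r (F * G * N)); [lra|].
  replace (/ (F * G) * (F * G * N)) with N by (field; lra).
  replace (T / N * (F * G * N)) with (T * F * G) by (field; lra).
  replace (1+1) with 2 in HF by ring. unfold T. lra.
Qed.

Lemma ps_le_Series a N : (forall n, 0 <= a n) -> ex_series a -> sum_f_R0 a N <= Series a.
Proof.
  intros Ha He. apply sum_incr; [|exact Ha].
  apply is_series_Reals, Series_correct, He.
Qed.

Lemma Series_le_bound a M : ex_series a -> (forall N, sum_f_R0 a N <= M) -> Series a <= M.
Proof.
  intros He HN.
  assert (H1 : is_lim_seq (fun N => sum_f_R0 a N) (Series a)).
  { apply is_lim_seq_Reals. pose proof (proj1 (is_series_Reals a _) (Series_correct a He)). exact H. }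
  pose proof (is_lim_seq_le _ _ _ _ HN H1 (is_lim_seq_const M)). simpl in H. exact H.
Qed.

Lemma ex_series_tt v z : 0 <= z -> ex_series (tt v z).
Proof.
  intros Hz.
  apply (ex_series_le (tt v z) (fun k => z ^ v / INR (fact v) * ((z ^ 2 / INR (S v)) ^ k / INR (fact k)))).
  - intros k. unfold norm; simpl. unfold abs; simpl. rewrite Rabs_pos_eq by (apply tt_nonneg; lra).
    apply tt_le1; lra.
  - apply exp_ex_series_scal.
Qed.

Lemma Series_tt_ge v z : 0 <= z -> z ^ v / INR (fact v) <= Series (tt v z).
Proof.
  intros Hz. pose proof (ps_le_Series (tt v z) 0 (fun k => tt_nonneg v z k Hz) (ex_series_tt v z Hz)) as H.
  simpl in H. unfold tt in H. simpl in H. rewrite Rmult_1_l in H. exact H.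
Qed.

Lemma Series_tt_le1 v z : 0 <= z -> Series (tt v z) <= z ^ v / INR (fact v) * exp (z ^ 2 / INR (S v)).
Proof.
  intros Hz. rewrite <- (is_series_unique _ _ (exp_is_series (z ^ 2 / INR (S v)))).
  rewrite <- Series_scal_l. apply Series_le.
  - intros k; split; [apply tt_nonneg; lra| apply tt_le1; lra].
  - apply exp_ex_series_scal.
Qed.

Lemma Series_tt_le2 v z : 0 <= z -> Series (tt v z) <= exp (2 * z).
Proof.
  intros Hz. apply Series_le_bound; [apply ex_series_tt; lra|].
  set (e := fun n => (2 * z) ^ n / INR (fact n)).
  assert (He : forall n, 0 <= e n).
  { intros n; unfold e. apply Rmult_le_pos; [apply pow_le; lra| apply Rlt_le, Rinv_0_lt_compat, INR_fact_lt_0]. }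
  assert (Hs : forall n, e n <= sum_f_R0 e n).
  { intros [|n]; simpl; [lra|]. pose proof (cond_pos_sum e n He). lra. }
  assert (Key : forall N, sum_f_R0 (tt v z) N <= sum_f_R0 e (2 * N + v)).
  { induction N as [|N IH].
    - simpl. pose proof (tt_le2 v z 0 Hz). simpl in H. specialize (Hs v). unfold e at 1 in Hs. lra.
    - replace (2 * S N + v)%nat with (S (S (2 * N + v))) by lia.
      rewrite !tech5.
      pose proof (tt_le2 v z (S N) Hz). replace (2 * S N + v)%nat with (S (S (2 * N + v))) in H by lia.
      pose proof (He (S (2*N+v))). unfold e in *. lra. }
  intros N. eapply Rle_trans; [apply Key|]. unfold e. apply exp_ge_taylor. lra.
Qed.

Lemma Rpower_m3 v z : 0 < z -> Rpower z (INR (S v) - 3) = z ^ v / z ^ 2.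
Proof.
  intros Hz. assert (Eq : INR (S v) - 3 = INR v + - INR 2) by (rewrite S_INR; simpl (INR 2); lra). rewrite Eq.
  rewrite Rpower_plus, Rpower_Ropp, !Rpower_pow by lra. reflexivity.
Qed.

Definition Kf (v : nat) (z : R) : R :=
  exp (- (2 * z)) * INR (fact v) * z ^ 2 / (2 * INR (S v) * z ^ v).

Lemma Kf_pos v z : 0 < z -> 0 < Kf v z.
Proof.
  intros Hz. unfold Kf. pose proof (INR_fact_lt_0 v). pose proof (exp_pos (-(2*z))).
  assert (0 < INR (S v)) by (apply lt_0_INR; lia).
  assert (0 < z ^ v) by (apply pow_lt; lra).
  assert (0 < z ^ 2) by (apply pow_lt; lra).
  apply Rdiv_lt_0_compat; repeat apply Rmult_lt_0_compat; lra.
Qed.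

Lemma fm_eq v E : 0 < E -> fm (S v) E = Kf v (2 * E) * Series (tt v (2 * E)).
Proof.
  intros HE. unfold fm, besselI, Kf.
  replace (S v - 1)%nat with v by lia.
  replace (4 * E / 2) with (2 * E) by field.
  rewrite Rpower_m3 by lra.
  change (Series (fun k : nat => (2 * E) ^ (2 * k + v) / (INR (fact k) * INR (fact (k + v)))))
    with (Series (tt v (2 * E))).
  replace (- (4 * E)) with (- (2 * (2 * E))) by ring.
  pose proof (INR_fact_lt_0 v).
  assert (0 < INR (S v)) by (apply lt_0_INR; lia).
  assert (0 < (2*E) ^ v) by (apply pow_lt; lra).
  assert (0 < (2*E) ^ 2) by (apply pow_lt; lra).
  field. repeat split; lra.
Qed.

Lemma F1 v E : 0 < E -> exp (- (2 * (2*E))) * (2*E) ^ 2 / (2 * INR (S v)) <= fm (S v) E.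
Proof.
  intros HE. rewrite fm_eq by lra.
  pose proof (Series_tt_ge v (2*E) ltac:(lra)).
  pose proof (Kf_pos v (2*E) ltac:(lra)).
  apply Rle_trans with (Kf v (2*E) * ((2*E) ^ v / INR (fact v))).
  - unfold Kf. pose proof (INR_fact_lt_0 v).
    assert (0 < INR (S v)) by (apply lt_0_INR; lia).
    assert (0 < (2*E) ^ v) by (apply pow_lt; lra).
    right. field. repeat split; lra.
  - apply Rmult_le_compat_l; lra.
Qed.

Lemma F2 v E : 0 < E ->
  fm (S v) E <= exp (- (2 * (2*E)) + (2*E) ^ 2 / INR (S v)) * (2*E) ^ 2 / (2 * INR (S v)).
Proof.
  intros HE. rewrite fm_eq by lra.
  pose proof (Series_tt_le1 v (2*E) ltac:(lra)).
  pose proof (Kf_pos v (2*E) ltac:(lra)).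
  apply Rle_trans with (Kf v (2*E) * ((2*E) ^ v / INR (fact v) * exp ((2*E) ^ 2 / INR (S v)))).
  - apply Rmult_le_compat_l; lra.
  - unfold Kf. pose proof (INR_fact_lt_0 v).
    assert (0 < INR (S v)) by (apply lt_0_INR; lia).
    assert (0 < (2*E) ^ v) by (apply pow_lt; lra).
    rewrite exp_plus. right. field. repeat split; lra.
Qed.

Lemma F3 v E : 0 < E ->
  fm (S v) E <= INR (fact v) * (2*E) ^ 2 / (2 * INR (S v) * (2*E) ^ v).
Proof.
  intros HE. rewrite fm_eq by lra.
  pose proof (Series_tt_le2 v (2*E) ltac:(lra)).
  pose proof (Kf_pos v (2*E) ltac:(lra)).
  apply Rle_trans with (Kf v (2*E) * exp (2 * (2*E))).
  - apply Rmult_le_compat_l; lra.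
  - unfold Kf. pose proof (INR_fact_lt_0 v).
    assert (0 < INR (S v)) by (apply lt_0_INR; lia).
    assert (0 < (2*E) ^ v) by (apply pow_lt; lra).
    rewrite exp_Ropp.
    pose proof (exp_pos (2*(2*E))).
    right. field. repeat split; lra.
Qed.

Lemma fm_nonneg v E : 0 < E -> 0 <= fm (S v) E.
Proof.
  intros HE. eapply Rle_trans; [|apply (F1 v E HE)].
  assert (0 < INR (S v)) by (apply lt_0_INR; lia). pose proof (exp_pos (- (2 * (2*E)))).
  apply Rmult_le_pos; [apply Rmult_le_pos; [lra| apply pow_le; lra]|apply Rlt_le, Rinv_0_lt_compat; lra].
Qed.

Lemma exp_le x y : x <= y -> exp x <= exp y.
Proof. intros H; destruct (Rle_lt_or_eq_dec _ _ H) as [H'|H']; [apply Rlt_le, exp_increasing; exact H'|subst; lra]. Qed.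

Lemma ln_le' x y : 0 < x -> x <= y -> ln x <= ln y.
Proof. intros Hx H; destruct (Rle_lt_or_eq_dec _ _ H) as [H'|H']; [apply Rlt_le, ln_increasing; lra|subst; lra]. Qed.

Lemma exp_pow_INR x n : exp x ^ n = exp (INR n * x).
Proof. rewrite <- Rpower_pow by apply exp_pos. unfold Rpower. rewrite ln_exp. reflexivity. Qed.

Lemma part3 : forall Em : nat -> R,
     (forall m : nat, (2 <= m)%nat -> 0 < Em m) ->
     exp_decay Em ->
     exp_decay (fun m : nat => fm m (Em m)).
Proof.
  intros Em Hpos [c [Hc [C [N HN]]]].
  exists c. split; [exact Hc|].
  exists (exp (4 * C ^ 2) * (2 * C ^ 2)), (Nat.max N 2).
  intros m Hm.
  destruct m as [|v]; [lia|].
  set (E := Em (S v)).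
  assert (HE : 0 < E) by (apply Hpos; lia).
  assert (HB : Rabs E <= C * c ^ S v) by (apply HN; lia).
  rewrite Rabs_pos_eq in HB by lra.
  assert (Hcm : 0 < c ^ S v <= 1).
  { split; [apply pow_lt; lra| apply Rlt_le, (pow_lt_1_compat c (S v)); [lra|lia]]. }
  assert (HC : 0 <= C) by nra.
  assert (HE2 : E ^ 2 <= C ^ 2 * c ^ S v).
  { replace (E ^ 2) with (E * E) by ring. replace (C ^ 2 * c ^ S v) with (C * C * c ^ S v) by ring.
    assert (E * E <= (C * c ^ S v) * (C * c ^ S v)) by nra. nra. }
  assert (Hv : 1 <= INR (S v)) by (rewrite S_INR; pose proof (pos_INR v); lra).
  rewrite Rabs_pos_eq by (apply fm_nonneg; lra).
  eapply Rle_trans; [apply F2; lra|].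
  set (X := (2 * E) ^ 2).
  assert (HX : X = 4 * E ^ 2) by (unfold X; ring).
  assert (HXm : X / INR (S v) <= X).
  { unfold Rdiv. assert (0 <= X) by (rewrite HX; nra).
    assert (/ INR (S v) <= 1). { rewrite <- Rinv_1. apply Rinv_le_contravar; lra. }
    nra. }
  assert (Hexp : exp (- (2 * (2 * E)) + X / INR (S v)) <= exp (4 * C ^ 2)).
  { apply exp_le. nra. }
  assert (HX2 : X / (2 * INR (S v)) <= 2 * C ^ 2 * c ^ S v).
  { unfold Rdiv. assert (0 <= X) by (rewrite HX; nra).
    assert (/ (2 * INR (S v)) <= / 2). { apply Rinv_le_contravar; lra. }
    nra. }
  assert (0 <= X / (2 * INR (S v))).
  { apply Rmult_le_pos; [rewrite HX; nra| apply Rlt_le, Rinv_0_lt_compat; lra]. }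
  replace (exp (- (2 * (2 * E)) + X / INR (S v)) * X / (2 * INR (S v)))
    with (exp (- (2 * (2 * E)) + X / INR (S v)) * (X / (2 * INR (S v)))) by (unfold Rdiv; ring).
  pose proof (exp_pos (- (2 * (2 * E)) + X / INR (S v))).
  replace (exp (4 * C ^ 2) * (2 * C ^ 2) * c ^ S v) with (exp (4 * C ^ 2) * (2 * C ^ 2 * c ^ S v)) by ring.
  apply Rmult_le_compat; lra.
Qed.

Lemma decay_of (u : nat -> R) A d : 0 < d -> 0 <= A ->
  (forall v, (1 <= v)%nat -> Rabs (u (S v)) <= A * INR v * exp (- d * INR v)) -> exp_decay u.
Proof.
  intros Hd HA Hu.
  exists (exp (- d / 2)). split.
  { split; [apply exp_pos|]. rewrite <- exp_0. apply exp_increasing. lra. }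
  exists (2 * A / d * exp (d / 2)), 2%nat.
  intros m Hm. destruct m as [|v]; [lia|].
  eapply Rle_trans; [apply Hu; lia|].
  rewrite exp_pow_INR, S_INR.
  set (w := INR v).
  assert (Hw : d * w / 2 <= exp (d * w / 2)) by (pose proof (exp_ineq1_le (d * w / 2)); lra).
  assert (E1 : exp (- d * w) = exp (- d * w / 2) * exp (- d * w / 2)).
  { rewrite <- !exp_plus. f_equal. field. }
  assert (E2 : exp (d / 2) * exp ((w + 1) * (- d / 2)) = exp (- d * w / 2)).
  { rewrite <- exp_plus. f_equal. field. }
  assert (E3 : exp (d * w / 2) * exp (- d * w / 2) = 1).
  { rewrite <- exp_plus. replace (d * w / 2 + - d * w / 2) with 0 by field. apply exp_0. }
  pose proof (exp_pos (- d * w / 2)). pose proof (exp_pos (d * w / 2)).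
  assert (0 <= w) by apply pos_INR.
  replace (2 * A / d * exp (d / 2) * exp ((w + 1) * (- d / 2)))
    with (A * exp (- d * w / 2) * (2 / d)) by (rewrite <- E2; field; lra).
  rewrite E1.
  replace (A * w * (exp (- d * w / 2) * exp (- d * w / 2)))
    with (A * exp (- d * w / 2) * (w * exp (- d * w / 2))) by ring.
  apply Rmult_le_compat_l; [nra|].
  assert (w <= 2 / d * exp (d * w / 2)).
  { apply (Rmult_le_reg_l (d / 2)); [lra|].
    replace (d / 2 * (2 / d * exp (d * w / 2))) with (exp (d * w / 2)) by (field; lra). lra. }
  apply Rle_trans with (2 / d * exp (d * w / 2) * exp (- d * w / 2)).
  - apply Rmult_le_compat_r; lra.
  - rewrite Rmult_assoc, E3. lra.
Qed.

Lemma part1 a : 0 < a -> exp_decay (fun m : nat => fm m (a * (INR m - 1))).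
Proof.
  intros Ha.
  destruct (Rlt_le_dec a 1) as [Ha1|Ha1].
  - apply (decay_of _ (2 * a ^ 2) (4 * a * (1 - a))); [nra|nra|].
    intros v Hv. rewrite S_INR. replace (INR v + 1 - 1) with (INR v) by ring.
    set (w := INR v).
    assert (Hw : 1 <= w) by (unfold w; apply (le_INR 1); lia).
    assert (HE : 0 < a * w) by nra.
    rewrite Rabs_pos_eq by (apply fm_nonneg; lra).
    eapply Rle_trans; [apply F2; lra|].
    rewrite S_INR. fold w.
    set (Q := w ^ 2 / (w + 1)).
    assert (HQ : 0 <= Q <= w).
    { unfold Q. split; [apply Rmult_le_pos; [nra| apply Rlt_le, Rinv_0_lt_compat; lra]|].
      apply (Rmult_le_reg_r (w + 1)); [lra|]. unfold Rdiv. rewrite Rmult_assoc, Rinv_l by lra. nra. }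
    replace ((2 * (a * w)) ^ 2 / (w + 1)) with (4 * a ^ 2 * Q) by (unfold Q; field; lra).
    replace (exp (- (2 * (2 * (a * w))) + 4 * a ^ 2 * Q) * (2 * (a * w)) ^ 2 / (2 * (w + 1)))
      with (exp (- (2 * (2 * (a * w))) + 4 * a ^ 2 * Q) * (2 * a ^ 2 * Q)) by (unfold Q; field; lra).
    replace (2 * a ^ 2 * w * exp (- (4 * a * (1 - a)) * w))
      with (exp (- (4 * a * (1 - a)) * w) * (2 * a ^ 2 * w)) by ring.
    pose proof (exp_pos (- (2 * (2 * (a * w))) + 4 * a ^ 2 * Q)).
    apply Rmult_le_compat; try nra.
    apply exp_le. nra.
  - apply (decay_of _ (2 * a ^ 2) (ln 2)).
    { rewrite <- ln_1. apply ln_increasing; lra. }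
    { nra. }
    intros v Hv. rewrite S_INR. replace (INR v + 1 - 1) with (INR v) by ring.
    set (w := INR v).
    assert (Hw : 1 <= w) by (unfold w; apply (le_INR 1); lia).
    assert (HE : 0 < a * w) by nra.
    rewrite Rabs_pos_eq by (apply fm_nonneg; lra).
    eapply Rle_trans; [apply F3; lra|].
    rewrite S_INR. fold w.
    set (Q := w ^ 2 / (w + 1)).
    assert (HQ : 0 <= Q <= w).
    { unfold Q. split; [apply Rmult_le_pos; [nra| apply Rlt_le, Rinv_0_lt_compat; lra]|].
      apply (Rmult_le_reg_r (w + 1)); [lra|]. unfold Rdiv. rewrite Rmult_assoc, Rinv_l by lra. nra. }
    assert (Hwv : 0 < w ^ v) by (apply pow_lt; lra).
    assert (H2a : 0 < (2 * a) ^ v) by (apply pow_lt; lra).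
    assert (Hfact : INR (fact v) / w ^ v <= 1).
    { apply (Rmult_le_reg_r (w ^ v)); [lra|]. unfold Rdiv. rewrite Rmult_assoc, Rinv_l by lra.
      rewrite Rmult_1_r, Rmult_1_l. unfold w. rewrite <- pow_INR. apply le_INR, fact_ub. }
    assert (Hf0 : 0 <= INR (fact v) / w ^ v).
    { apply Rmult_le_pos; [apply pos_INR| apply Rlt_le, Rinv_0_lt_compat; lra]. }
    assert (H2 : / (2 * a) ^ v <= exp (- ln 2 * w)).
    { replace (- ln 2 * w) with (- (w * ln 2)) by ring. rewrite exp_Ropp.
      unfold w. rewrite <- exp_pow_INR, exp_ln by lra.
      apply Rinv_le_contravar; [apply pow_lt; lra|]. apply pow_incr. lra. }
    assert (Hinv : 0 <= / (2 * a) ^ v) by (apply Rlt_le, Rinv_0_lt_compat; lra).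
    replace (INR (fact v) * (2 * (a * w)) ^ 2 / (2 * (w + 1) * (2 * (a * w)) ^ v))
      with ((INR (fact v) / w ^ v) * ((2 * a ^ 2 * Q) * / (2 * a) ^ v)).
    2:{ unfold Q. assert (Ep : (2 * (a * w)) ^ v = (2 * a) ^ v * w ^ v)
          by (rewrite <- Rpow_mult_distr; f_equal; ring).
        rewrite Ep. field. repeat split; lra. }
    replace (2 * a ^ 2 * w * exp (- ln 2 * w)) with (1 * ((2 * a ^ 2 * w) * exp (- ln 2 * w))) by ring.
    apply Rmult_le_compat; try lra.
    { apply Rmult_le_pos; nra. }
    apply Rmult_le_compat; nra.
Qed.

Lemma part2 a r b : 0 < a -> r < 1 -> 0 < b < 1 ->
  is_lim_seq (fun m : nat => fm m (a * Rpower (INR m) r) / b ^ m) p_infty.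
Proof.
  intros Ha Hr Hb.
  apply is_lim_seq_spec. simpl. intros M.
  set (L := - ln b).
  assert (HL : 0 < L) by (unfold L; assert (ln b < ln 1) by (apply ln_increasing; lra); rewrite ln_1 in H; lra).
  set (s := (1 + Rmax r 0) / 2).
  assert (Hs1 : r <= s) by (unfold s; pose proof (Rmax_l r 0); lra).
  assert (Hs2 : 1/2 <= s < 1) by (unfold s; pose proof (Rmax_r r 0); destruct (Rmax_Rle r 0 (Rmax r 0)) as [H1 _]; pose proof (Rmax_lub_lt r 0 1 Hr ltac:(lra)); lra).
  set (K := 4 * a + 2 * Rabs (2 * r - 1)).
  assert (HK : 0 < K) by (unfold K; pose proof (Rabs_pos (2 * r - 1)); lra).
  set (T0 := ln (2 * K / L) / (1 - s)).
  destruct (INR_unbounded (Rmax (exp T0) (Rmax (M / (a ^ 2 * L)) 1))) as [N HN].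
  exists N. intros m Hm.
  assert (HmN : INR N <= INR m) by (apply le_INR; lia).
  pose proof (Rmax_l (exp T0) (Rmax (M / (a ^ 2 * L)) 1)).
  pose proof (Rmax_r (exp T0) (Rmax (M / (a ^ 2 * L)) 1)).
  pose proof (Rmax_l (M / (a ^ 2 * L)) 1). pose proof (Rmax_r (M / (a ^ 2 * L)) 1).
  set (x := INR m) in *.
  assert (Hx1 : 1 < x) by lra.
  assert (HxT : exp T0 < x) by lra.
  assert (HxM : M / (a ^ 2 * L) < x) by lra.
  destruct m as [|v]; [simpl in x; unfold x in Hx1; lra|].
  set (l := ln x).
  assert (Hl0 : 0 <= l) by (unfold l; rewrite <- ln_1; apply ln_le'; lra).
  assert (Hxl : x = exp l) by (unfold l; rewrite exp_ln; lra).
  assert (HlT : T0 <= l) by (unfold l; rewrite <- (ln_exp T0); apply ln_le'; [apply exp_pos|lra]).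
  set (E := a * Rpower x r).
  assert (HE : E = a * exp (r * l)) by (unfold E, Rpower, l; f_equal; ring).
  assert (HEp : 0 < E) by (rewrite HE; pose proof (exp_pos (r * l)); nra).
  pose proof (F1 v E HEp) as HF. fold x in HF.
  assert (Hbm : b ^ S v = exp (- L * x)).
  { rewrite <- (exp_ln b) at 1 by lra. rewrite exp_pow_INR. unfold L, x. f_equal. ring. }
  rewrite Hbm.
  assert (Hlow : exp (- (2 * (2 * E))) * (2 * E) ^ 2 / (2 * x) / exp (- L * x)
                 = 2 * a ^ 2 * exp (L * x - 4 * E + (2 * r - 1) * l)).
  { replace (L * x - 4 * E + (2 * r - 1) * l)
      with (- (2 * (2 * E)) + r * l + r * l + - l + - (- L * x)) by ring.
    rewrite !exp_plus, !exp_Ropp.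
    assert (Er : exp (r * l) = E / a) by (rewrite HE; field; lra).
    rewrite Er, <- Hxl.
    pose proof (exp_pos (- L * x)). pose proof (exp_pos (- (2 * (2 * E)))).
    field. repeat split; try lra; apply Rgt_not_eq, exp_pos. }
  assert (Hdiv : exp (- (2 * (2 * E))) * (2 * E) ^ 2 / (2 * x) / exp (- L * x)
                 <= fm (S v) E / exp (- L * x)).
  { unfold Rdiv at 2 3. apply Rmult_le_compat_r; [apply Rlt_le, Rinv_0_lt_compat, exp_pos|]. exact HF. }
  rewrite Hlow in Hdiv.
  assert (Hrs : exp (r * l) <= exp (s * l)) by (apply exp_le; nra).
  assert (Hls : l <= 2 * exp (s * l)) by (pose proof (exp_ineq1_le (s * l)); nra).
  assert (H2r : - Rabs (2 * r - 1) * l <= (2 * r - 1) * l).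
  { pose proof (Rle_abs (- (2 * r - 1))). rewrite Rabs_Ropp in H3. nra. }
  assert (HKx : K * exp (s * l) <= L * x / 2).
  { assert (Hq : ln (2 * K / L) <= (1 - s) * l).
    { unfold T0 in HlT. apply (Rmult_le_compat_l (1 - s)) in HlT; [|lra].
      replace ((1 - s) * (ln (2 * K / L) / (1 - s))) with (ln (2 * K / L)) in HlT by (field; lra). exact HlT. }
    apply exp_le in Hq. rewrite exp_ln in Hq by (apply Rdiv_lt_0_compat; lra).
    assert (Ex : x = exp ((1 - s) * l) * exp (s * l)) by (rewrite <- exp_plus, Hxl; f_equal; ring).
    pose proof (exp_pos (s * l)).
    rewrite Ex. apply (Rmult_le_reg_l (2 / L)); [apply Rdiv_lt_0_compat; lra|].
    replace (2 / L * (L * (exp ((1 - s) * l) * exp (s * l)) / 2)) with (exp ((1 - s) * l) * exp (s * l)) by (field; lra).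
    replace (2 / L * (K * exp (s * l))) with (2 * K / L * exp (s * l)) by (field; lra).
    apply Rmult_le_compat_r; lra. }
  assert (HX : L * x / 2 <= L * x - 4 * E + (2 * r - 1) * l).
  { rewrite HE. unfold K in HKx. pose proof (Rabs_pos (2 * r - 1)). nra. }
  apply exp_le in HX.
  pose proof (exp_ineq1_le (L * x / 2)).
  assert (HMx : M <= a ^ 2 * L * x).
  { pose proof (Rmult_le_compat_l (a ^ 2 * L) _ _ ltac:(nra) (Rlt_le _ _ HxM)) as HH.
    replace (a ^ 2 * L * (M / (a ^ 2 * L))) with M in HH by (field; split; nra). lra. }
  assert (0 < a ^ 2) by nra.
  nra.
Qed.

Theorem mainTheorem7 :
  (* (i) *)
  (forall a : R, 0 < a ->
     exp_decay (fun m : nat => fm m (a * (INR m - 1)))) /\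
  (* (ii) *)
  (forall a r : R, 0 < a -> r < 1 ->
     forall b : R, 0 < b < 1 ->
       is_lim_seq (fun m : nat => fm m (a * Rpower (INR m) r) / b ^ m) p_infty) /\
  (* (iii) *)
  (forall Em : nat -> R,
     (forall m : nat, (2 <= m)%nat -> 0 < Em m) ->
     exp_decay Em ->
     exp_decay (fun m : nat => fm m (Em m))).
Proof.
  split; [exact part1|]. split.
  - intros a r Ha Hr b Hb. exact (part2 a r b Ha Hr Hb).
  - exact part3.
Qed.
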